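(* Let $\mathcal S$ be a (possibly infinite) set of curves in $\mathbb C^2$, each of degree at most $d$, and suppose that $\bigcap_{C\in\mathcal S}C$ contains a set $I$ with $|I|>d^2$. Then there is a curve $C_0$ with $C_0\subset\bigcap_{C\in\mathcal S}C$ and $|C_0\cap I|\geq |I|-(d-1)^2$.
   Context: A curve in $\mathbb C^2$ is the zero set of a polynomial in $\mathbb C[x,y]\setminus\mathbb C$; its degree is the minimum degree of a defining polynomial. *)

(* Defs.v *)
From mathcomp Require Import all_boot all_algebra.
From mathcomp Require Import complex.
From mathcomp Require Import Rstruct.
From mathcomp Require Import mpoly.
Set Implicit Arguments. Unset Strict Implicit. Unset Printing Implicit Defensive.
Import GRing.Theory Num.Theory.
Local Open Scope ring_scope.

Definition CC : numClosedFieldType := complex Rdefinitions.R.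

Definition pt := (CC * CC)%type.

Definition ev (p : {mpoly CC[2]}) (z : pt) : CC :=
  p.@[fun i : 'I_2 => if i == 0 :> nat then z.1 else z.2].

Definition zero_set (p : {mpoly CC[2]}) : pt -> Prop := fun z => ev p z = 0.

Definition nonconst (p : {mpoly CC[2]}) : Prop := forall c : CC, p <> c%:MP.

(* Total degree of a polynomial (msize p = 1 + total degree, 0 for p = 0). *)
Definition tdeg (p : {mpoly CC[2]}) : nat := (msize p).-1.

(* Z is a curve of degree at most d: Z is the zero set of a nonconstant
   polynomial, and the minimal degree of a defining polynomial is <= d,
   i.e. some defining polynomial has total degree <= d. *)
Definition curve (Z : pt -> Prop) : Prop :=
  exists p, nonconst p /\ (forall z, Z z <-> zero_set p z).

Definition curve_deg_le (Z : pt -> Prop) (d : nat) : Prop :=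
  exists p, nonconst p /\ (forall z, Z z <-> zero_set p z) /\ (tdeg p <= d)%N.

(* Main.v *)
Require Import Defs.
From mathcomp Require Import all_boot all_algebra.
From mathcomp Require Import complex Rstruct mpoly.
From mathcomp Require Import fingroup perm zify ring lra.
Import GRing.Theory Num.Theory.
Local Open Scope ring_scope.
Set Implicit Arguments. Unset Strict Implicit.
From Stdlib Require Import Classical.
Notation PP := {poly {poly CC}}.
Notation evx a := (map_poly (horner_eval a)).

Definition primitive (g : PP) := forall a : CC, evx a g != 0.

Lemma evxC (a : CC) (c : {poly CC}) : evx a (c%:P) = (c.[a])%:P.
Proof. by rewrite map_polyC /= horner_evalE. Qed.

Lemma divX (w : PP) (a : CC) : evx a w = 0 -> exists w', w = ('X - a%:P)%:P * w'.
Proof.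
move=> h; exists (\poly_(i < size w) (w`_i %/ ('X - a%:P))).
apply/polyP => i; rewrite coefCM coef_poly.
case: ltnP => hi; last by rewrite mulr0 nth_default.
have : (evx a w)`_i = 0 by rewrite h coef0.
rewrite coef_map /= horner_evalE => hr.
rewrite mulrC divpK //; by rewrite dvdp_XsubCl /root hr.
Qed.

Lemma XsubC_neq0 (a : CC) : ('X - a%:P : {poly CC}) != 0.
Proof. by rewrite -size_poly_eq0 size_XsubC. Qed.

Lemma gauss_aux k (c : {poly CC}) (A w g0 : PP) :
  (size c <= k)%N -> c != 0 -> primitive g0 -> c%:P * A = w * g0 ->
  exists A', A = A' * g0.
Proof.
elim: k c A w => [|k IH] c A w.
  by rewrite leqn0 size_poly_eq0 => /eqP ->; rewrite eqxx.
move=> hs c0 pg e.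
have [/closed_rootP [a ra]|s1] := boolP (size c != 1%N); last first.
  move: s1; rewrite negbK => /eqP s1.
  have cE : c = (c`_0)%:P by apply/size1_polyC; rewrite s1.
  have c00 : c`_0 != 0 by apply: contraNneq c0 => h; rewrite cE h.
  exists ((c`_0)^-1%:P%:P * w).
  by rewrite -mulrA -e mulrA {2}cE -!rmorphM /= mulVf // !rmorph1 mul1r.
have := congr1 (evx a) e; rewrite !rmorphM /= evxC (rootP ra) mul0r.
move/esym/eqP; rewrite mulf_eq0 (negbTE (pg a)) orbF => /eqP /divX [w' hw].
move: ra => /factor_theorem [c' hc].
have c'0 : c' != 0 by apply: contraNneq c0 => h; rewrite hc h mul0r.
apply: (IH c' A w') => //.
  move: hs; rewrite hc size_mul // ?XsubC_neq0 // size_XsubC addn2 /=.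
  by [].
apply: (mulfI (x := ('X - a%:P)%:P)); first by rewrite polyC_eq0 XsubC_neq0.
by rewrite mulrA -rmorphM /= [_ * c']mulrC -hc e hw mulrA.
Qed.

Lemma gauss (c : {poly CC}) (A w g0 : PP) :
  c != 0 -> primitive g0 -> c%:P * A = w * g0 -> exists A', A = A' * g0.
Proof. exact: (@gauss_aux (size c)). Qed.

Lemma prim_part_aux k (g : PP) : (size (lead_coef g) <= k)%N -> g != 0 ->
  exists e g0, [/\ e != 0, g = e%:P * g0, primitive g0 & size g0 = size g].
Proof.
elim: k g => [|k IH] g.
  by rewrite leqn0 size_poly_eq0 lead_coef_eq0 => /eqP ->; rewrite eqxx.
move=> hs g0.
case: (classic (primitive g)) => [pg|].
  by exists 1, g; split; rewrite ?mul1r ?oner_neq0.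
move=> /not_all_ex_not [a /negP /negPn /eqP /divX [g' hg']].
have g'0 : g' != 0 by apply: contraNneq g0 => h; rewrite hg' h mulr0.
have [|e [h [e0 he ph sh]]] := IH g' _ g'0.
  move: hs; rewrite hg' lead_coefM lead_coefC size_mul ?XsubC_neq0 ?lead_coef_eq0 //.
  by rewrite size_XsubC.
exists (('X - a%:P) * e), h; split => //.
- by rewrite mulf_neq0 ?XsubC_neq0.
- by rewrite hg' he rmorphM mulrA.
- by rewrite sh hg' mul_polyC size_scale // XsubC_neq0.
Qed.
Lemma prim_part (g : PP) : g != 0 ->
  exists e g0, [/\ e != 0, g = e%:P * g0, primitive g0 & size g0 = size g].
Proof. exact: (@prim_part_aux (size (lead_coef g))). Qed.

Lemma res0_common (A B : PP) : A != 0 -> B != 0 -> resultant A B = 0 ->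
  exists g0 A' B' : PP, [/\ (1 < size g0)%N, A = A' * g0 & B = B' * g0].
Proof.
move=> A0 B0 /eqP; rewrite resultant_eq0 => sg.
have g0 : gcdp A B != 0 by rewrite -size_poly_eq0 -lt0n (ltn_trans _ sg).
have [e [h [e0 he ph sh]]] := prim_part g0.
have [/= [c w] /= c0 hw] := Pdiv.Idomain.dvdpP _ _ (dvdp_gcdl A B).
have [/= [c' w'] /= c'0 hw'] := Pdiv.Idomain.dvdpP _ _ (dvdp_gcdr A B).
rewrite he mulrA -mul_polyC in hw.
rewrite he mulrA -mul_polyC in hw'.
have [A' hA'] := gauss c0 ph hw.
have [B' hB'] := gauss c'0 ph hw'.
by exists h, A', B'; split => //; rewrite sh.
Qed.

Lemma det_size_bound N (M : 'M[{poly CC}]_N) (r : 'I_N -> nat) (e : nat) :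
  (forall i j, M i j != 0 -> ((size (M i j)).-1 + j <= r i)%N) ->
  (\sum_i r i <= e + \sum_(j < N) j)%N -> (size (\det M) <= e.+1)%N.
Proof.
move=> hM hs; rewrite /determinant (leq_trans (size_sum _ _ _)) //.
apply/bigmax_leqP => s _; rewrite size_Msign.
have [/eqP ->|/prodf_neq0 nz] := boolP (\prod_i M i (s i) == 0).
  by rewrite size_poly0.
apply: (leq_trans (size_poly_prod_leq _ _)); rewrite cardT size_enum_ord.
have h1 : forall i, (size (M i (s i)) + s i <= (r i).+1)%N.
  move=> i; have := hM i (s i) (nz i isT); have := nz i isT.
  rewrite -size_poly_gt0; case: (size _) => //= k _; lia.
have h2 : (\sum_i (size (M i (s i)) + s i) <= \sum_i (r i).+1)%N by apply: leq_sum.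
rewrite big_split /= in h2.
have h3 : (\sum_i (s i : nat) = \sum_(j < N) (j : nat))%N.
  by rewrite [RHS](reindex_inj (@perm_inj _ s)).
have h4 : (\sum_(i < N) (r i).+1 = \sum_i r i + N)%N.
  transitivity (\sum_(i < N) (r i + 1))%N; first by apply: eq_bigr => i _; rewrite addn1.
  by rewrite big_split /= sum_nat_const card_ord muln1.
rewrite h3 h4 in h2.
move: hs h2; set a := (\sum_(i < N) size _)%N; set b := (\sum_(j < N) _)%N; set c := (\sum_i r i)%N.
lia.
Qed.

Definition tdle (k : nat) (D : PP) := forall i j, (k < i + j)%N -> D`_i`_j = 0.

Lemma tdle_coef k D i : tdle k D -> D`_i != 0 -> ((size (D`_i)%R).-1 + i <= k)%N.
Proof.
move=> h nz; rewrite leqNgt; apply/negP => lt.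
move: nz; rewrite -lead_coef_eq0 /lead_coef h ?eqxx //; lia.
Qed.

Lemma tdle_size k D : tdle k D -> (size D <= k.+1)%N.
Proof.
move=> h; have [->|D0] := eqVneq D 0; first by rewrite size_poly0.
have := tdle_coef (i := (size D).-1) h; rewrite -/(lead_coef D) lead_coef_eq0 => /(_ D0).
have : (0 < size D)%N by rewrite size_poly_gt0.
lia.
Qed.
Lemma splitl m n (k : 'I_m) : split (lshift n k) = inl k.
Proof. exact: (unsplitK (inl k)). Qed.
Lemma splitr m n (k : 'I_n) : split (rshift m k) = inr k.
Proof. exact: (unsplitK (inr k)). Qed.

Lemma res_size (A B : PP) m n : tdle m A -> tdle n B ->
  (size (resultant A B) <= (m * n).+1)%N.
Proof.
move=> hA hB.
have hdp : ((size A).-1 <= m)%N by have := tdle_size hA; lia.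
have hdq : ((size B).-1 <= n)%N by have := tdle_size hB; lia.
rewrite /resultant.
apply: (det_size_bound (r := fun i => match split i with inl k => (m + k)%N | inr k => (n + k)%N end)).
  move=> i j; rewrite Sylvester_mxE; case: (split i) => k /=; case: leqP => hk;
   rewrite ?mulr0n ?eqxx // mulr1n => nz.
    by have := tdle_coef hA nz; move: (size _).-1 => s; lia.
  by have := tdle_coef hB nz; move: (size _).-1 => s; lia.
rewrite !big_split_ord /=.
under eq_bigr do rewrite splitl.
under [X in (_ + X <= _)%N]eq_bigr do rewrite splitr.
rewrite /= !big_split /= !sum_nat_const !card_ord.
set S1 := (\sum_(i < _) (i : nat))%N.
set S2 := (\sum_(i < _) (i : nat))%N.
move: hdp hdq S1 S2; move: (size A).-1 (size B).-1 => a b hdp hdq S1 S2.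
rewrite -(subnK hdp) -(subnK hdq); move: (m - a)%N (n - b)%N => u v.
nia.
Qed.
Lemma tdle_mono k k' D : (k <= k')%N -> tdle k D -> tdle k' D.
Proof. by move=> hk h i j hij; apply: h; lia. Qed.

Lemma tdle0 k : tdle k 0.
Proof. by move=> i j _; rewrite coef0 coef0. Qed.

Lemma tdle_add k P Q : tdle k P -> tdle k Q -> tdle k (P + Q).
Proof. by move=> hP hQ i j h; rewrite coefD coefD hP // hQ // addr0. Qed.

Lemma tdle_sum (I : Type) (r : seq I) (Pr : pred I) (F : I -> PP) k :
  (forall i, Pr i -> tdle k (F i)) -> tdle k (\sum_(i <- r | Pr i) F i).
Proof.
by move=> h; apply: (big_ind (tdle k)) => //; [exact: tdle0 | exact: tdle_add].
Qed.

Lemma tdle_C k (c : CC) : tdle k (c%:P%:P).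
Proof.
move=> i j h; rewrite coefC; case: eqP => [e|_]; last by rewrite coef0.
by rewrite coefC; case: eqP => // e'; lia.
Qed.

Lemma tdle_X : tdle 1 ('X : PP).
Proof.
move=> i j h; rewrite coefX; case: eqP => [e|_]; last by rewrite coef0.
by rewrite coefC; case: eqP => // e'; lia.
Qed.

Definition xP : PP := ('X)%:P.

Lemma tdle_xP : tdle 1 xP.
Proof.
move=> i j h; rewrite coefC; case: eqP => [e|_]; last by rewrite coef0.
by rewrite coefX; case: eqP => // e'; lia.
Qed.

Lemma tdle_mul k1 k2 P Q : tdle k1 P -> tdle k2 Q -> tdle (k1 + k2) (P * Q).
Proof.
move=> hP hQ i j h; rewrite coefM coef_sum big1 // => a _.
rewrite coefM big1 // => b _.
have ha := ltn_ord a; have hb := ltn_ord b.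
case: (leqP (a + b) k1) => hh.
  by rewrite (hQ (i - a)%N (j - b)%N) ?mulr0 //; lia.
by rewrite hP ?mul0r.
Qed.

Lemma tdle_exp k P e : tdle k P -> tdle (k * e) (P ^+ e).
Proof.
move=> hP; elim: e => [|e IH]; first by rewrite expr0 muln0; have := @tdle_C 0 1; rewrite !polyC1.
by rewrite exprS mulnS; apply: tdle_mul.
Qed.

Notation fC := (@polyC {poly CC} \o @polyC CC).
Definition hsh (t : CC) (i : 'I_2) : PP := if i == 0 :> nat then xP + t%:P%:P * 'X else 'X.
Notation phi t := (mmap fC (hsh t)).
Notation g1 t := (horner_eval ('X_0 - t *: 'X_1 : {mpoly CC[2]}) \o map_poly (@mpolyC 2 CC)).
Notation psi t := (horner_eval ('X_1 : {mpoly CC[2]}) \o map_poly (g1 t)).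


Lemma tdle_hsh t i : tdle 1 (hsh t i).
Proof.
rewrite /hsh; case: eqP => _; last exact: tdle_X.
apply: tdle_add; first exact: tdle_xP.
exact: (tdle_mul (k1 := 0) (@tdle_C 0 t) tdle_X).
Qed.

Lemma tdle_phi t p : tdle (tdeg p) (phi t p).
Proof.
rewrite /mmap big_seq; apply: tdle_sum => m hm.
have hd := msize_mdeg_lt hm.
rewrite mdegE big_ord_recr big_ord1 /= in hd.
rewrite /mmap1 big_ord_recr big_ord1 /=.
apply: tdle_mono (tdle_mul (@tdle_C 0 _) (tdle_mul (@tdle_exp _ _ _ (@tdle_hsh t _)) (@tdle_exp _ _ _ (@tdle_hsh t _)))).
move: hd; rewrite /tdeg; move: (m _) (m _) => a b; case: (mmeasure _ _) => /= [|s]; lia.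
Qed.
Lemma rmorph_mmap (S T : comNzRingType) (f : CC -> S) (h : 'I_2 -> S)
   (F : {rmorphism S -> T}) (p : {mpoly CC[2]}) :
  F (mmap f h p) = mmap (F \o f) (F \o h) p.
Proof.
rewrite /mmap rmorph_sum; apply: eq_bigr => m _.
rewrite rmorphM /mmap1 rmorph_prod; congr (_ * _).
by apply: eq_bigr => i _; rewrite rmorphXn.
Qed.

Lemma eq_mmap (S : comNzRingType) (f1 f2 : CC -> S) (h1 h2 : 'I_2 -> S) p :
  f1 =1 f2 -> h1 =1 h2 -> mmap f1 h1 p = mmap f2 h2 p.
Proof.
move=> ef eh; rewrite /mmap; apply: eq_bigr => m _; rewrite ef /mmap1.
by congr (_ * _); apply: eq_bigr => i _; rewrite eh.
Qed.

Lemma ev_phi t p a b : (evx a (phi t p)).[b] = ev p (a + t * b, b).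
Proof.
transitivity ((horner_eval b \o evx a) (phi t p)); first by [].
rewrite rmorph_mmap /ev /meval; apply: eq_mmap => [c|i] /=.
  by rewrite !map_polyC /= !horner_evalE !hornerC.
rewrite /hsh; case: i => [[|[|i]] hi] //=.
  rewrite rmorphD rmorphM /= /xP !map_polyC map_polyX /= !horner_evalE.
  by rewrite !hornerE.
by rewrite map_polyX /= horner_evalE hornerX.
Qed.

Lemma psi_phi t p : psi t (phi t p) = p.
Proof.
rewrite rmorph_mmap; rewrite -[RHS]comp_mpoly_id /comp_mpoly.
apply: eq_mmap => [c|i] /=.
  by rewrite !map_polyC /= !horner_evalE !hornerC map_polyC hornerC.
rewrite tnth_mktuple /hsh; case: i => [[|[|i]] hi] //=.
  rewrite rmorphD rmorphM /= /xP !map_polyC map_polyX /= !horner_evalE.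
  rewrite !hornerE map_polyX map_polyC !hornerE.
  rewrite [X in _ + X](_ : _ = t *: 'X_1); last by rewrite -mul_mpolyC.
  rewrite subrK.
  by have -> : Ordinal hi = 0 :> 'I_2 by apply: val_inj.
rewrite map_polyX /= horner_evalE hornerX.
by have -> : Ordinal hi = 1 :> 'I_2 by apply: val_inj.
Qed.

Lemma ev_psi t D u v : ev (psi t D) (u, v) = (evx (u - t * v) D).[v].
Proof.
rewrite /ev /= horner_evalE.
set w := (fun i : 'I_2 => _).
rewrite -[meval w _](horner_map (meval w)) -map_poly_comp.
apply: f_equal2; last exact: mevalXU.
apply: eq_map_poly => c /=.
rewrite !horner_evalE -[meval w _](horner_map (meval w)) -map_poly_comp.
apply: f_equal2; last first.
  change (meval w ('X_0 - t *: 'X_1 : {mpoly CC[2]}) = u - t * v).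
  by rewrite mevalB mevalZ !mevalXU.
by rewrite map_poly_id // => c' _ /=; rewrite mevalC.
Qed.
Lemma exists_nonroot (q : {poly CC}) : q != 0 -> exists a, q.[a] != 0.
Proof.
move=> q0; apply: NNPP => hn.
have hall : forall a, q.[a] = 0.
  by move=> a; apply/eqP; apply/negPn/negP => h; apply: hn; exists a.
pose s := [seq (i%:R : CC) | i <- iota 0 (size q)].
have us : uniq s by rewrite map_inj_uniq ?iota_uniq // => i j /eqP; rewrite eqr_nat => /eqP.
have : all (root q) s by apply/allP => x _; apply/rootP; exact: hall.
move/(max_poly_roots q0)/(_ us); by rewrite size_map size_iota ltnn.
Qed.

Lemma exists_notin (L : seq CC) : exists c, c \notin L.
Proof.
have q0 : \prod_(x <- L) ('X - x%:P) != 0.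
  by rewrite prodf_seq_neq0; apply/allP => x _; rewrite XsubC_neq0.
have [a ha] := exists_nonroot q0; exists a; apply: contra ha => ha.
by rewrite -root_prod_XsubC in ha.
Qed.
Lemma choose_t (P : seq pt) : uniq P ->
  exists t : CC, uniq [seq z.1 - t * z.2 | z <- P].
Proof.
move=> uP.
have [t ht] := exists_notin [seq (z.1 - w.1) / (z.2 - w.2) | z <- P, w <- P].
exists t; rewrite map_inj_in_uniq // => z w hz hw /= e.
have [e2|ne2] := eqVneq z.2 w.2.
  move: e; rewrite e2 => /addIr e1.
  by case: z w e1 e2 {hz hw} => [z1 z2] [w1 w2] /= -> ->.
exfalso; move/negP: ht; apply.
have -> : t = (z.1 - w.1) / (z.2 - w.2).
  have e' : z.1 - w.1 = t * (z.2 - w.2).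
    by rewrite -[z.1](subrK (t * z.2)) e; ring.
  by rewrite e' mulfK // subr_eq0.
exact: (allpairs_f (fun z w : pt => (z.1 - w.1) / (z.2 - w.2)) hz hw).
Qed.

Lemma size_evx_le (g : PP) a : (size (evx a g) <= size g)%N.
Proof. rewrite /map_poly. exact: size_poly. Qed.

Lemma size_evx_ge (g : PP) a : (lead_coef g).[a] != 0 -> size (evx a g) = size g.
Proof.
move=> h; apply/eqP; rewrite eqn_leq size_evx_le /=.
have g0 : g != 0 by apply: contraNneq h => ->; rewrite lead_coef0 horner0.
rewrite (polySpred g0) ltnNge; apply/negP => le.
move: h; rewrite /lead_coef -horner_evalE -(coef_map (horner_eval a)) nth_default //.
by rewrite eqxx.
Qed.

Lemma nonconst_psi t (g : PP) : (1 < size g)%N -> nonconst (psi t g).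
Proof.
move=> sg c hc.
have g0 : g != 0 by rewrite -size_poly_gt0 (ltn_trans _ sg).
have l0 : lead_coef g != 0 by rewrite lead_coef_eq0.
have [a ha] := exists_nonroot l0.
have sh := size_evx_ge ha.
have [r hr] : exists r, root (evx a g) r by apply/closed_rootP; rewrite sh; lia.
have h0 : evx a g != 0 by rewrite -size_poly_gt0 sh (ltn_trans _ sg).
have [s hs] := exists_nonroot h0.
have e1 := ev_psi t g (a + t * r) r; have e2 := ev_psi t g (a + t * s) s.
rewrite addrK hc /ev mevalC in e1.
rewrite addrK hc /ev mevalC in e2.
by move: hs; rewrite -e2 e1 (rootP hr) eqxx.
Qed.
Lemma tdeg0_const (p : {mpoly CC[2]}) : tdeg p = 0%N -> p = (p@_0)%:MP.
Proof. by move=> h; apply: msize1_polyC; move: h; rewrite /tdeg; lia. Qed.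

Lemma ev_const_ne0 (p : {mpoly CC[2]}) z : p != 0 -> tdeg p = 0%N -> ev p z != 0.
Proof.
move=> p0 /tdeg0_const e; rewrite /ev e mevalC; apply: contraNneq p0 => h.
by rewrite e h mpolyC0.
Qed.

Lemma evx_ev2 (a b : CC) (u w : PP) :
  (evx a (u * w)).[b] = (evx a u).[b] * (evx a w).[b].
Proof. by rewrite rmorphM /= hornerM. Qed.

Lemma roots_bound (c : {poly CC}) (X : seq CC) : c != 0 -> uniq X ->
  (forall x, x \in X -> c.[x] = 0) -> (size X < size c)%N.
Proof. by move=> c0 uX h; apply: max_poly_roots => //; apply/allP => x /h /rootP. Qed.

Lemma WB (A B : {mpoly CC[2]}) m n (P : seq pt) : A != 0 -> B != 0 ->
  (tdeg A <= m)%N -> (tdeg B <= n)%N ->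
  (forall D A' B', nonconst D -> A = A' * D -> B = B' * D -> False) -> uniq P ->
  (forall z, z \in P -> ev A z = 0 /\ ev B z = 0) -> (size P <= m * n)%N.
Proof.
move=> A0 B0 hA hB hcop uP hz.
have [Pnil|[z0 hz0]] : P = [::] \/ exists z, z \in P.
  by case: P {uP hz} => [|z P]; [left | right; exists z; rewrite inE eqxx].
  by rewrite Pnil.
have m0 : (0 < m)%N.
  rewrite lt0n; apply/eqP => m0; move: hA; rewrite m0 leqn0 => /eqP h.
  by have := ev_const_ne0 z0 A0 h; rewrite (hz z0 hz0).1 eqxx.
have n0 : (0 < n)%N.
  rewrite lt0n; apply/eqP => n0; move: hB; rewrite n0 leqn0 => /eqP h.
  by have := ev_const_ne0 z0 B0 h; rewrite (hz z0 hz0).2 eqxx.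
have [t ut] := choose_t uP.
set X := [seq z.1 - t * z.2 | z <- P] in ut.
have sX : size X = size P by rewrite size_map.
set At := phi t A; set Bt := phi t B.
have tA : tdle m At by apply: tdle_mono hA (@tdle_phi t A).
have tB : tdle n Bt by apply: tdle_mono hB (@tdle_phi t B).
have At0 : At != 0 by apply: contraNneq A0 => h; rewrite -(psi_phi t A) -/At h rmorph0.
have Bt0 : Bt != 0 by apply: contraNneq B0 => h; rewrite -(psi_phi t B) -/Bt h rmorph0.
have hzt : forall x, x \in X -> exists b, (evx x At).[b] = 0 /\ (evx x Bt).[b] = 0.
  move=> x /mapP [z hzP ->]; exists z.2.
  rewrite /At /Bt !ev_phi subrK; case: z hzP => z1 z2 /= /hz; done.
have [R0|R0] := eqVneq (resultant At Bt) 0.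
  have [g [A' [B' [sg eA eB]]]] := res0_common At0 Bt0 R0.
  apply: False_ind; apply: (hcop (psi t g) (psi t A') (psi t B')).
  - exact: nonconst_psi.
  - by rewrite -(psi_phi t A) -/At eA rmorphM.
  - by rewrite -(psi_phi t B) -/Bt eB rmorphM.
have [sA|sA] := leqP (size At) 1.
  have eA : At = (At`_0)%:P by apply: size1_polyC.
  have c0 : At`_0 != 0 by apply: contraNneq At0 => h; rewrite eA h.
  have := roots_bound c0 ut.
  have := tdle_coef tA c0; rewrite addn0 -sX => hc hr.
  have : (size X < size (At`_0)%R)%N.
    by apply: hr => x /hzt [b [hb _]]; move: hb; rewrite {1}eA evxC hornerC.
  move: hc; move: (size _) => k; nia.
have [sB|sB] := leqP (size Bt) 1.
  have eB : Bt = (Bt`_0)%:P by apply: size1_polyC.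
  have c0 : Bt`_0 != 0 by apply: contraNneq Bt0 => h; rewrite eB h.
  have := roots_bound c0 ut.
  have := tdle_coef tB c0; rewrite addn0 -sX => hc hr.
  have : (size X < size (Bt`_0)%R)%N.
    by apply: hr => x /hzt [b [_ hb]]; move: hb; rewrite {1}eB evxC hornerC.
  move: hc; move: (size _) => k; nia.
have [[u v] /= _ hR] := resultant_in_ideal sA sB.
have := roots_bound R0 ut.
have := res_size tA tB; rewrite -sX => hs hr.
have : (size X < size (resultant At Bt))%N.
  apply: hr => x /hzt [b [h1 h2]].
  have := congr1 (fun q => (evx x q).[b]) hR => /=.
  rewrite map_polyC hornerC /= horner_evalE => ->.
  by rewrite rmorphD hornerD !evx_ev2 h1 h2 !mulr0 addr0.
lia.
Qed.
Definition dvd (D A : {mpoly CC[2]}) := exists A', A = A' * D.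

Lemma dvd_refl D : dvd D D.
Proof. by exists 1; rewrite mul1r. Qed.

Lemma dvd_trans D E A : dvd D E -> dvd E A -> dvd D A.
Proof. by move=> [E' ->] [A' ->]; exists (A' * E'); rewrite mulrA. Qed.

Lemma tdegM (p q : {mpoly CC[2]}) : p != 0 -> q != 0 -> tdeg (p * q) = (tdeg p + tdeg q)%N.
Proof.
move=> p0 q0; rewrite /tdeg msizeM //.
have := msize_poly_eq0 p; have := msize_poly_eq0 q.
rewrite (negbTE p0) (negbTE q0); move: (msize p) (msize q) => a b.
case: a => // a; case: b => // b _ _; lia.
Qed.

Lemma nonconst_tdeg D : nonconst D <-> (0 < tdeg D)%N.
Proof.
split => [h|h c e].
  rewrite lt0n; apply/eqP => /tdeg0_const e; exact: (h _ e).
by move: h; rewrite e /tdeg msizeC; case: (_ != 0).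
Qed.

Lemma dvd_tdeg D A : A != 0 -> dvd D A -> D != 0 /\ (tdeg D <= tdeg A)%N.
Proof.
move=> A0 [A' eA]; have A'0 : A' != 0 by apply: contraNneq A0 => h; rewrite eA h mul0r.
have D0 : D != 0 by apply: contraNneq A0 => h; rewrite eA h mulr0.
by split => //; rewrite eA tdegM // leq_addl.
Qed.

Lemma ev_mul p q z : ev (p * q) z = ev p z * ev q z.
Proof. by rewrite /ev mevalM. Qed.

Lemma ex_max (Q : nat -> Prop) N : (exists k, Q k) -> (forall k, Q k -> (k <= N)%N) ->
  exists k, Q k /\ forall j, Q j -> (j <= k)%N.
Proof.
elim: N => [|N IH] [k hk] hb.
  by exists k; split => // j /hb; have := hb k hk; lia.
case: (classic (Q N.+1)) => hN.
  by exists N.+1; split.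
apply: IH; first by exists k.
move=> j hj; have := hb j hj; rewrite leq_eqVlt => /orP [/eqP e|]; last by [].
by move: hj; rewrite e.
Qed.

Lemma claim a : forall b (A : {mpoly CC[2]}) (F : {mpoly CC[2]} -> Prop) (P : seq pt),
  A != 0 -> (tdeg A <= a)%N -> (forall B, F B -> B != 0 /\ (tdeg B <= b)%N) ->
  (forall D, nonconst D -> dvd D A -> (forall B, F B -> dvd D B) -> False) ->
  uniq P -> (forall z, z \in P -> ev A z = 0 /\ forall B, F B -> ev B z = 0) ->
  (size P <= a * b)%N.
Proof.
elim/ltn_ind: a => a IH b A F P A0 hA hF hnd uP hz.
have [tA0|tApos] := posnP (tdeg A).
  case: P uP hz => [|z P] // _ hz.
  by have := ev_const_ne0 z A0 tA0; rewrite (hz z (mem_head _ _)).1 eqxx.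
have ncA : nonconst A by apply/nonconst_tdeg.
have [B [FB nAB]] : exists B, F B /\ ~ dvd A B.
  apply: NNPP => hn; apply: (hnd A ncA (dvd_refl A)) => B FB.
  by apply: NNPP => h; apply: hn; exists B.
have [B0 hB] := hF B FB.
have hzB : forall z, z \in P -> ev A z = 0 /\ ev B z = 0.
  by move=> z /hz [h1 h2]; split => //; apply: h2.
case: (classic (exists D, nonconst D /\ dvd D A /\ dvd D B)) => [hex|hno]; last first.
  apply: (WB A0 B0 hA hB) => // D A' B' ncD eA eB; apply: hno; exists D.
  by split => //; split; [exists A' | exists B'].
have [k [[D [ncD dA dB eD]] hmax]] :=
  ex_max (Q := fun k => exists D, [/\ nonconst D, dvd D A, dvd D B & tdeg D = k])
         (N := tdeg A) ltac:(by case: hex => D [? [? ?]]; exists (tdeg D), D)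
         ltac:(by move=> k [D [_ dD _ <-]]; case: (dvd_tdeg A0 dD)).
have [D0 _] := dvd_tdeg A0 dA.
move: (dA) (dB) => [A' eA] [B' eB].
have A'0 : A' != 0 by apply: contraNneq A0 => h; rewrite eA h mul0r.
have B'0 : B' != 0 by apply: contraNneq B0 => h; rewrite eB h mul0r.
have tAe : tdeg A = (tdeg A' + tdeg D)%N by rewrite eA tdegM.
have tBe : tdeg B = (tdeg B' + tdeg D)%N by rewrite eB tdegM.
have tA'pos : (0 < tdeg A')%N.
  rewrite lt0n; apply/eqP => /tdeg0_const ec; apply: nAB.
  move: ec; set c := A'@_0 => ec.
  have c0 : c != 0 by apply: contraNneq A'0 => h; rewrite ec h mpolyC0.
  exists (B' * c^-1%:MP); rewrite eA ec eB -!mulrA; congr (_ * _).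
  by rewrite mulrA -mpolyCM mulVf // mpolyC1 mul1r.
have tDpos : (0 < tdeg D)%N by apply/nonconst_tdeg.
pose P1 := [seq z <- P | ev D z == 0].
pose P2 := [seq z <- P | ev D z != 0].
have sP : size P = (size P1 + size P2)%N.
  by rewrite !size_filter -(count_predC (fun z => ev D z == 0)).
have h1 : (size P1 <= tdeg D * b)%N.
  apply: (IH (tdeg D) _ b D F) => //.
  - by move: hA tA'pos; rewrite tAe; lia.
  - move=> E ncE dE hE; apply: (hnd E ncE) => //; exact: dvd_trans dE dA.
  - exact: filter_uniq.
  - move=> z; rewrite mem_filter => /andP [/eqP h /hz [_ h2]]; by split.
have h2 : (size P2 <= tdeg A' * tdeg B')%N.
  apply: (WB A'0 B'0 (leqnn _) (leqnn _)).
  - move=> E A'' B'' ncE eA' eB'.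
    have [E0 _] : E != 0 /\ true by split => //; apply: contraNneq A'0 => h; rewrite eA' h mulr0.
    have := hmax (tdeg (E * D)); rewrite tdegM // eD.
    have : (0 < tdeg E)%N by apply/nonconst_tdeg.
    move=> hE hm; suff : (tdeg E + k <= k)%N by lia.
    apply: hm; exists (E * D); split.
    + by apply/nonconst_tdeg; rewrite tdegM // eD; lia.
    + by exists A''; rewrite eA eA' mulrA.
    + by exists B''; rewrite eB eB' mulrA.
    + by rewrite tdegM // eD.
  - exact: filter_uniq.
  - move=> z; rewrite mem_filter => /andP [hD hP].
    have [hzA hzB'] := hzB z hP.
    move: hzA hzB'; rewrite eA eB !ev_mul => /eqP; rewrite mulf_eq0 (negbTE hD) orbF.
    move=> /eqP -> /eqP; rewrite mulf_eq0 (negbTE hD) orbF => /eqP ->; by split.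
rewrite sP; move: h1 h2 hA hB; rewrite tAe tBe.
move: (tdeg D) (tdeg A') (tdeg B') => x y w; nia.
Qed.
Lemma nonconst_neq0 D : nonconst D -> D != 0.
Proof. by move=> h; apply/negP => /eqP e; apply: (h 0); rewrite e mpolyC0. Qed.

Lemma ev_XsubC (w : pt) (c : CC) : ev ('X_0 - c%:MP) w = w.1 - c.
Proof. by rewrite /ev mevalB mevalXU mevalC. Qed.

Lemma ev_p0 (I : seq pt) w :
  ev (\prod_(z <- I) ('X_0 - (z.1)%:MP)) w = \prod_(z <- I) (w.1 - z.1).
Proof.
rewrite /ev rmorph_prod; apply: eq_bigr => z _; exact: ev_XsubC.
Qed.

Unset Implicit Arguments.

Theorem lemma2p3 (d : nat) (S : (pt -> Prop) -> Prop) (I : seq pt) :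
  (forall C, S C -> curve C /\ curve_deg_le C d) ->
  uniq I ->
  (forall z, z \in I -> forall C, S C -> C z) ->
  (d ^ 2 < size I)%N ->
  exists C0 : pt -> Prop,
    curve C0 /\
    (forall z, C0 z -> forall C, S C -> C z) /\
    exists J : seq pt,
      uniq J /\ (forall z, z \in J -> z \in I /\ C0 z) /\
      (size J)%:Z >= (size I)%:Z - (d%:Z - 1) ^+ 2.
Proof.
move=> hS uI hI hsz.
pose F h := [/\ nonconst h, (tdeg h <= d)%N & exists C, S C /\ forall z, C z <-> zero_set h z].
have hFev : forall h z, F h -> z \in I -> ev h z = 0.
  by move=> h z [_ _ [C [SC hC]]] zI; apply/hC; apply: hI.
have hSF : forall C, S C -> exists h, F h /\ forall z, C z <-> zero_set h z.
  move=> C SC; have [_ [h [nh [hC th]]]] := hS C SC.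
  by exists h; split => //; split => //; exists C.
have hF0 : forall h, F h -> h != 0 /\ (tdeg h <= d)%N.
  by move=> h [nh th _]; split => //; exact: nonconst_neq0.
case: (classic (exists C, S C)) => [[C1 SC1]|noS]; last first.
  pose p0 := \prod_(z <- I) ('X_0 - (z.1)%:MP : {mpoly CC[2]}).
  have hz0 : forall z, z \in I -> ev p0 z = 0.
    move=> z zI; rewrite ev_p0; apply/eqP; rewrite prodf_seq_eq0.
    by apply/hasP; exists z => //; rewrite subrr eqxx.
  exists (zero_set p0); split.
    exists p0; split => // c hc.
    have [z0 z0I] : exists z0, z0 \in I.
      by move: hsz; case: (I) => [|z I'] //; exists z; rewrite mem_head.
    have [x hx] := exists_notin [seq z.1 | z <- I].
    have := hz0 z0 z0I; rewrite hc /ev mevalC => c0.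
    have : ev p0 (x, 0) != 0.
      rewrite ev_p0 prodf_seq_neq0; apply/allP => z hzI /=; rewrite subr_eq0.
      by apply: contraNneq hx => ->; apply: map_f.
    by rewrite hc /ev mevalC c0 eqxx.
  split; first by move=> z _ C SC; exfalso; apply: noS; exists C.
  exists I; split => //; split; first by move=> z zI; split => //; exact: hz0.
  by rewrite lerBlDr lerDl sqr_ge0.
have [h1 [Fh1 _]] := hSF C1 SC1.
have [h10 th1] := hF0 h1 Fh1.
case: (classic (exists D, nonconst D /\ forall h, F h -> dvd D h)) => [hex|hno]; last first.
  exfalso; have hc := @claim d d h1 F I h10 th1 hF0.
  move: hsz; rewrite leqNgt expnS expn1; apply/negP/negPn; apply: hc => //.
  - by move=> D ncD _ hD; apply: hno; exists D.
  - by move=> z zI; split; [exact: hFev | move=> B FB; exact: hFev].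
have [k [[D [ncD hdD eD]] hmax]] :=
  ex_max (Q := fun k => exists D, [/\ nonconst D, (forall h, F h -> dvd D h) & tdeg D = k])
         (N := tdeg h1) ltac:(by case: hex => D [? ?]; exists (tdeg D), D)
         ltac:(by move=> k [D [_ dD <-]]; case: (dvd_tdeg h10 (dD h1 Fh1))).
have D0 := nonconst_neq0 ncD.
have kpos : (0 < k)%N by rewrite -eD; apply/nonconst_tdeg.
have [h1' eh1] := hdD h1 Fh1.
have h1'0 : h1' != 0 by apply: contraNneq h10 => h; rewrite eh1 h mul0r.
have th1' : (tdeg h1' + k <= d)%N by rewrite -eD -tdegM // -eh1.
exists (zero_set D); split; first by exists D.
split.
  move=> z hz C SC; have [h [Fh hC]] := hSF C SC; apply/hC.
  by have [h' ->] := hdD h Fh; rewrite /zero_set ev_mul hz mulr0.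
exists [seq z <- I | ev D z == 0]; split; first exact: filter_uniq.
split; first by move=> z; rewrite mem_filter => /andP [/eqP h hzI].
pose P2 := [seq z <- I | ev D z != 0].
have sI : size I = (size [seq z <- I | ev D z == 0%R] + size P2)%N.
  by rewrite !size_filter -(count_predC (fun z => ev D z == 0)).
pose F' B' := exists h, F h /\ h = B' * D.
have h2 : (size P2 <= (d - k) * (d - k))%N.
  apply: (@claim (d - k) (d - k) h1' F' P2 h1'0).
  - lia.
  - move=> B' [h [Fh eh]]; have [h0 th] := hF0 h Fh.
    have B'0 : B' != 0 by apply: contraNneq h0 => e; rewrite eh e mul0r.
    split => //; move: th; rewrite eh tdegM // eD; lia.
  - move=> E ncE dE hE.
    have E0 := nonconst_neq0 ncE.
    have := hmax (tdeg (E * D)); rewrite tdegM // eD.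
    have : (0 < tdeg E)%N by apply/nonconst_tdeg.
    move=> hEp hm; suff : (tdeg E + k <= k)%N by lia.
    apply: hm; exists (E * D); split.
    + by apply/nonconst_tdeg; rewrite tdegM // eD; lia.
    + move=> h Fh; have [h' eh] := hdD h Fh.
      have [h'' eh'] := hE h' (ex_intro _ h (conj Fh eh)).
      by exists h''; rewrite eh eh' mulrA.
    + by rewrite tdegM // eD.
  - exact: filter_uniq.
  - move=> z; rewrite mem_filter => /andP [hDz zI]; split.
      have := hFev h1 z Fh1 zI; rewrite eh1 ev_mul => /eqP.
      by rewrite mulf_eq0 (negbTE hDz) orbF => /eqP.
    move=> B' [h [Fh eh]]; have := hFev h z Fh zI; rewrite eh ev_mul => /eqP.
    by rewrite mulf_eq0 (negbTE hDz) orbF => /eqP.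
rewrite sI; move: h2 th1' kpos; move: (size [seq _ <- I | _]) (size P2) => a b.
move=> h2 th kp.
have kd : (k <= d)%N by lia.
rewrite -(subnK kd) in th h2 *.
move: (d - k)%N h2 th => e h2 th.
rewrite addnK in h2; rewrite expr2; nia.
Qed.
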